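(* Let $\mathbb{G}$ be a linear array, $\mathbb{U}$ the central ULA of its difference coarray, and $\mathbb{F}_r$ ($r\ge1$) the fractal array generated by $\mathbb{G}$. Fix a coupling limit $q\ge0$ and coupling coefficients $c_0=1,c_1,\dots,c_q\in\mathbb{C}$, with $c_k=0$ for $k>q$. Assume $q<\max(\mathbb{G})$ and $q+\max(\mathbb{G})<|\mathbb{U}|$. Then the coupling leakages of $\mathbb{G}$ and $\mathbb{F}_r$ coincide: $\mathcal{L}_{\mathbb{F}_r}=\mathcal{L}_{\mathbb{G}}$.
   Context: A linear array is a finite set $\mathbb{G}\subset\mathbb{Z}$ with $\min\mathbb{G}=0$; its difference coarray is $\mathbb{D}=\{n_1-n_2:n_1,n_2\in\mathbb{G}\}$; its central ULA $\mathbb{U}$ is the largest set $\{-m,\dots,m\}$ contained in $\mathbb{D}$. The fractal array generated by $\mathbb{G}$ (with $M=|\mathbb{U}|$) is $\mathbb{F}_0=\{0\}$, $\mathbb{F}_{r+1}=\bigcup_{n\in\mathbb{G}}(\mathbb{F}_r+nM^r)$ where $A+t=\{a+t:a\in A\}$. For an array $\mathbb{A}=\{a_1<\dots<a_N\}$, its mutual coupling matrix is the $N\times N$ matrix $\mathbf{C}_{\mathbb{A}}$ with entries $(\mathbf{C}_{\mathbb{A}})_{k,l}=c_{|a_k-a_l|}$ (coefficients depend only on sensor separation, $c_0=1$, and $c_d=0$ for $d>q$). Its coupling leakage is $\mathcal{L}_{\mathbb{A}}=\|\mathbf{C}_{\mathbb{A}}-\mathrm{diag}(\mathbf{C}_{\mathbb{A}})\|_F/\|\mathbf{C}_{\mathbb{A}}\|_F$,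 where $\mathrm{diag}(\mathbf{C})$ zeroes all off-diagonal entries and $\|\cdot\|_F$ is the Frobenius norm. *)

(* Defs.v *)
From HB Require Import structures.
From mathcomp Require Import all_boot all_order all_algebra.
Set Implicit Arguments. Unset Strict Implicit. Unset Printing Implicit Defensive.
Import Order.TTheory GRing.Theory Num.Theory.

(* A linear array is represented by a sequence of naturals (read as a set);
   min G = 0 with G ⊂ Z forces G ⊂ N and 0 ∈ G. *)

Definition array_of (s : seq nat) : seq nat := sort leq (undup s).

Definition maxa (G : seq nat) : nat := \max_(n <- G) n.

(* k ∈ difference coarray (for k >= 0): k = n1 - n2 with n1, n2 ∈ G *)
Definition in_coarray (G : seq nat) (k : nat) : bool :=
  has (fun n => (n + k) \in G) G.

(* {-m..m} ⊆ D ; D is symmetric so it suffices to check 0..m *)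
Definition ula_ok (G : seq nat) (m : nat) : bool :=
  [forall k : 'I_m.+1, in_coarray G k].

(* largest m with {-m..m} ⊆ D (necessarily m <= max G) *)
Definition ula_half (G : seq nat) : nat :=
  \max_(m < (maxa G).+1 | ula_ok G m) (m : nat).

Definition ula_size (G : seq nat) : nat := (ula_half G).*2.+1.

Fixpoint fractal (G : seq nat) (M : nat) (r : nat) : seq nat :=
  match r with
  | 0 => [:: 0]
  | r'.+1 => undup (flatten [seq [seq a + n * M ^ r' | a <- fractal G M r'] | n <- G])
  end.

Definition fractal_array (G : seq nat) (r : nat) : seq nat :=
  array_of (fractal G (ula_size G) r).

Definition natdist (m n : nat) : nat := (m - n) + (n - m).

Local Open Scope ring_scope.

Definition coupling_matrix (C : numClosedFieldType) (c : nat -> C) (A : seq nat)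
  : 'M[C]_(size A) :=
  \matrix_(k, l) c (natdist (nth 0%N A k) (nth 0%N A l)).

Definition mdiag (C : numClosedFieldType) n (X : 'M[C]_n) : 'M[C]_n :=
  diag_mx (\row_i X i i).

Definition frob (C : numClosedFieldType) n (X : 'M[C]_n) : C :=
  sqrtC (\sum_i \sum_j `|X i j| ^+ 2).

Definition leakage (C : numClosedFieldType) (c : nat -> C) (A : seq nat) : C :=
  frob (coupling_matrix c A - mdiag (coupling_matrix c A)) / frob (coupling_matrix c A).

(* Main.v *)
Require Import Defs.
From HB Require Import structures.
From mathcomp Require Import all_boot all_order all_algebra.
From mathcomp Require Import zify.
Import Order.TTheory GRing.Theory Num.Theory.
Set Implicit Arguments. Unset Strict Implicit.
Local Open Scope ring_scope.

Section Aux.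
Variable C : numClosedFieldType.
Variable c : nat -> C.

Definition hW (a b : nat) : C := (a != b)%:R * `|c (natdist a b)| ^+ 2.
Definition Wt (A : seq nat) : C := \sum_(x <- A) \sum_(y <- A) hW x y.

Lemma Wt_perm A B : perm_eq A B -> Wt A = Wt B.
Proof.
move=> h; rewrite /Wt (perm_big _ h); apply: eq_bigr => x _; exact: perm_big.
Qed.

Lemma Wt_ge0 A : 0 <= Wt A.
Proof.
apply: sumr_ge0 => x _; apply: sumr_ge0 => y _.
by rewrite /hW mulr_ge0 ?ler0n ?exprn_ge0 ?normr_ge0.
Qed.

Lemma natdist_nn a : natdist a a = 0%N.
Proof. by rewrite /natdist subnn. Qed.

Lemma ord_to_seq (A : seq nat) (F : nat -> nat -> C) :
  \sum_(i < size A) \sum_(j < size A) F (nth 0%N A i) (nth 0%N A j)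
  = \sum_(x <- A) \sum_(y <- A) F x y.
Proof.
rewrite [RHS](big_nth 0%N) big_mkord; apply: eq_bigr => i _.
by rewrite [RHS](big_nth 0%N) big_mkord.
Qed.

Lemma leak_eq (A : seq nat) : uniq A -> c 0%N = 1 ->
  leakage c A = sqrtC (Wt A) / sqrtC (Wt A + (size A)%:R).
Proof.
move=> hA hc0; rewrite /leakage /frob; congr (sqrtC _ / sqrtC _).
- rewrite /Wt -ord_to_seq; apply: eq_bigr => i _; apply: eq_bigr => j _.
  rewrite /mdiag !mxE /hW (nth_uniq 0%N (ltn_ord i) (ltn_ord j) hA).
  case: (eqVneq i j) => [->|hij]; first by rewrite subrr normr0 expr0n /= eqxx mul0r.
  by rewrite hij mulr0n subr0 mul1r.
- have -> : (size A)%:R = \sum_(i < size A) \sum_(j < size A) ((i == j)%:R : C).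
    transitivity (\sum_(i < size A) (1 : C)); first by rewrite sumr_const card_ord.
    apply: eq_bigr => i _; rewrite (bigD1 i) //= eqxx big1 ?addr0 //.
    by move=> j /negPf; rewrite eq_sym => ->.
  rewrite /Wt -ord_to_seq -big_split /=; apply: eq_bigr => i _.
  rewrite -big_split /=; apply: eq_bigr => j _.
  rewrite /coupling_matrix !mxE /hW (nth_uniq 0%N (ltn_ord i) (ltn_ord j) hA).
  case: (eqVneq i j) => [->|hij]; last by rewrite hij mul1r addr0.
  by rewrite natdist_nn hc0 normr1 expr1n eqxx mul0r add0r.
Qed.

Lemma leak_array (X : seq nat) : c 0%N = 1 ->
  leakage c (array_of X) =
  sqrtC (Wt (undup X)) / sqrtC (Wt (undup X) + (size (undup X))%:R).
Proof.
move=> hc0; have hp : perm_eq (array_of X) (undup X) by rewrite /array_of perm_sort.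
rewrite leak_eq //; last by rewrite /array_of sort_uniq undup_uniq.
by rewrite (Wt_perm hp) (perm_size hp).
Qed.

Lemma sep (n n' a a' P q : nat) : (n < n')%N -> (a + q < P)%N ->
  (a + n * P + q < a' + n' * P)%N.
Proof.
move=> hn hP; have : (n.+1 * P <= n' * P)%N by rewrite leq_mul2r hn orbT.
rewrite mulSn; lia.
Qed.

Lemma far (n n' a a' P q : nat) : n != n' -> (a + q < P)%N -> (a' + q < P)%N ->
  (q < natdist (a + n * P) (a' + n' * P))%N.
Proof.
rewrite /natdist; case: (ltngtP n n') => // h _ h1 h2.
- by have := sep a' h h1; lia.
- by have := sep a h h2; lia.
Qed.

Lemma sum_const_seq (s : seq nat) (x : C) : \sum_(i <- s) x = x *+ size s.
Proof. by elim: s => [|y s IH]; rewrite ?big_nil ?big_cons ?IH ?mulrS. Qed.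

Lemma sum_shift (S : seq nat) k (F : nat -> C) :
  \sum_(i <- [seq (a + k)%N | a <- S]) F i = \sum_(a <- S) F (a + k)%N.
Proof. by rewrite big_map. Qed.

Lemma Wt_allpairs (q P : nat) (G S : seq nat) :
  (forall d, (q < d)%N -> c d = 0) -> uniq G ->
  (forall a, a \in S -> (a + q < P)%N) ->
  Wt [seq (a + n * P)%N | n <- G, a <- S] = Wt S *+ size G.
Proof.
move=> hcq hG hS.
rewrite /Wt big_flatten /= (big_map (fun n => [seq (a + n * P)%N | a <- S])).
rewrite -sum_const_seq; apply: eq_big_seq => n hn.
rewrite sum_shift; apply: eq_big_seq => a ha.
rewrite big_flatten /= (big_map (fun n => [seq (a + n * P)%N | a <- S])).
rewrite (bigD1_seq n) //= sum_shift [X in _ + X]big1_seq ?addr0.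
  by apply: eq_bigr => a' _; rewrite /hW /natdist !subnDr eqn_add2r.
move=> n' /andP[hn' _]; rewrite sum_shift big1_seq // => a' ha'.
rewrite /hW hcq ?normr0 ?expr0n ?mulr0 //.
by apply: far; rewrite ?hS // eq_sym.
Qed.
Lemma step_perm (P : nat) (G S : seq nat) : uniq S ->
  (forall a, a \in S -> (a < P)%N) ->
  perm_eq (undup [seq (a + n * P)%N | n <- G, a <- S])
          [seq (a + n * P)%N | n <- undup G, a <- S].
Proof.
move=> hSu hS; apply: uniq_perm; first exact: undup_uniq.
  apply: allpairs_uniq => //; first exact: undup_uniq.
  move=> [n a] [n' a'] /allpairsP[[x y] [hx hy [-> ->]]].
  move=> /allpairsP[[x' y'] [hx' hy' [-> ->]]] /= heq.
  have h1 := hS _ hy; have h2 := hS _ hy'.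
  case: (ltngtP x x') => hxx.
  - exfalso; move: h1 => /= h1; have := @sep x x' y y' P 0 hxx; lia.
  - exfalso; move: h2 => /= h2; have := @sep x' x y' y P 0 hxx; lia.
  - by move: heq; rewrite hxx => /eqP; rewrite eqn_add2r => /eqP ->.
move=> x; rewrite mem_undup; apply: mem_allpairs => // y; by rewrite mem_undup.
Qed.

Lemma le_maxa (G : seq nat) x : x \in G -> (x <= maxa G)%N.
Proof.
rewrite /maxa; elim: G => // y s IH; rewrite inE big_cons => /orP[/eqP->|/IH h].
  exact: leq_maxl.
exact: leq_trans h (leq_maxr _ _).
Qed.

Lemma frac_ind (G : seq nat) (q M : nat) :
  (forall d, (q < d)%N -> c d = 0) -> (maxa G + q < M)%N -> forall r,
  [/\ uniq (fractal G M r.+1),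
      (forall x, x \in fractal G M r.+1 -> x + M <= M ^ r.+1 + maxa G)%N,
      Wt (fractal G M r.+1) = Wt (undup G) *+ (size (undup G)) ^ r &
      size (fractal G M r.+1) = ((size (undup G)) ^ r.+1)%N].
Proof.
move=> hcq hM; elim=> [|r [hu hb hW hs]].
  have -> : fractal G M 1 = undup G.
    rewrite /=; congr undup; elim: G {hM} => //= n G' ->.
    by rewrite expn0 muln1 add0n.
  split; rewrite ?undup_uniq ?expn1 //.
  by move=> x; rewrite mem_undup => /le_maxa; rewrite addnC leq_add2l.
set Sr := fractal G M r.+1.
have -> : fractal G M r.+2 = undup [seq (a + n * M ^ r.+1)%N | n <- G, a <- Sr] by [].
have hSP : forall a, a \in Sr -> (a + q < M ^ r.+1)%N.
  move=> a /hb; move: hM; move: (maxa G) (M ^ r.+1)%N => m P; clear hu hb hW hs hcq; lia.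
have hp := @step_perm (M ^ r.+1) G Sr hu (fun a ha => leq_ltn_trans (leq_addr _ _) (hSP a ha)).
split.
- exact: undup_uniq.
- move=> x; rewrite mem_undup => /allpairsP[[n a] [/= hn ha ->]].
  have hn1 := le_maxa hn; have ha1 := hb _ ha.
  have : (n.+1 * M ^ r.+1 <= M * M ^ r.+1)%N by rewrite leq_mul2r; apply/orP; right; lia.
  have e : (M ^ r.+2 = M * M ^ r.+1)%N by rewrite expnS.
  rewrite mulSn e; move: ha1 hM; move: (M ^ r.+1)%N (maxa G) => P m; lia.
- rewrite (Wt_perm hp) (Wt_allpairs hcq (undup_uniq G) hSP) hW.
  by rewrite -mulrnA expnSr.
- by rewrite (perm_size hp) size_allpairs hs [RHS]expnS.
Qed.
End Aux.

Theorem theorem7 (C : numClosedFieldType) (G : seq nat) (q r : nat) (c : nat -> C)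
  (hG0 : 0%N \in G) (hr : (1 <= r)%N)
  (hc0 : c 0%N = 1) (hcq : forall d : nat, (q < d)%N -> c d = 0)
  (hq : (q < maxa G)%N) (hqU : (q + maxa G < ula_size G)%N) :
  leakage c (fractal_array G r) = leakage c (array_of G).
Proof.
have hM : (maxa G + q < ula_size G)%N by lia.
case: r hr => // r _.
rewrite /fractal_array !leak_array //.
have [hu _ hW hs] := frac_ind hcq hM r.
rewrite (undup_id hu) hW hs.
set W := Wt c (undup G); set g := size (undup G).
have gpos : (0 < g)%N.
  rewrite /g; case E: (undup G) => [|x s] //.
  by move: hG0; rewrite -mem_undup E.
have W0 : 0 <= W by apply: Wt_ge0.
rewrite -[W *+ _]mulr_natl expnSr natrM -mulrDr.
rewrite !sqrtCM ?nnegrE ?ler0n ?addr_ge0 // invfM mulrACA divff ?mul1r //.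
rewrite sqrtC_eq0 pnatr_eq0 expn_eq0; apply/negP => /andP[/eqP g0 _].
by move: gpos; rewrite g0.
Qed.
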